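(* Let $q:\mathbb{Z}^n\to\mathbb{Z}$ be a slender unit form admitting a maximal omnipresent root. Then $q$ is weakly non-negative.
   Context: A unit form is $q(x_1,\dots,x_n)=\sum_i x_i^2+\sum_{i<j}q_{ij}x_ix_j$ with $q_{ij}\in\mathbb{Z}$; its bilinear form is $q(x,y)=q(x+y)-q(x)-q(y)$, so $q(e_i,e_j)=q_{ij}$. $q$ is slender if $q(e_i,e_j)\ge -1$ for all $i\ne j$. A root of $q$ is $v\in\mathbb{Z}^n$ with non-negative coordinates and $q(v)=1$; omnipresent if all $v(i)>0$; maximal if every root $w\ge v$ (coordinatewise) equals $v$. $q$ is weakly non-negative if $q(v)\ge0$ for all $v\in\mathbb{N}^n$. *)

(* Defs.v *)
From mathcomp Require Import all_boot all_order all_algebra.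
Set Implicit Arguments. Unset Strict Implicit. Unset Printing Implicit Defensive.
Import Order.TTheory GRing.Theory Num.Theory.
Local Open Scope ring_scope.

(* A unit form q(x) = sum_i x_i^2 + sum_{i<j} q_ij x_i x_j on Z^n is given by
   its integer coefficients qc i j; only the entries with i < j are used. *)
Definition unit_form (n : nat) (qc : 'I_n -> 'I_n -> int) (x : 'I_n -> int) : int :=
  \sum_(i < n) x i ^+ 2 + \sum_(i < n) \sum_(j < n | (i < j)%N) qc i j * x i * x j.

Definition unit_bil (n : nat) (qc : 'I_n -> 'I_n -> int) (x y : 'I_n -> int) : int :=
  unit_form qc (fun i => x i + y i) - unit_form qc x - unit_form qc y.

Definition ebasis (n : nat) (i : 'I_n) : 'I_n -> int := fun k => (k == i)%:R.

Definition slender (n : nat) (qc : 'I_n -> 'I_n -> int) : Prop :=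
  forall i j : 'I_n, i != j -> unit_bil qc (ebasis i) (ebasis j) >= -1.

Definition is_root (n : nat) (qc : 'I_n -> 'I_n -> int) (v : 'I_n -> int) : Prop :=
  (forall i, 0 <= v i) /\ unit_form qc v = 1.

Definition omnipresent (n : nat) (v : 'I_n -> int) : Prop := forall i, 0 < v i.

Definition maximal_root (n : nat) (qc : 'I_n -> 'I_n -> int) (v : 'I_n -> int) : Prop :=
  is_root qc v /\
  forall w, is_root qc w -> (forall i, v i <= w i) -> forall i, w i = v i.

Definition weakly_nonneg (n : nat) (qc : 'I_n -> 'I_n -> int) : Prop :=
  forall v : 'I_n -> int, (forall i, 0 <= v i) -> 0 <= unit_form qc v.

(* Main.v *)
Require Import Defs.
From mathcomp Require Import all_boot all_order all_algebra.
From mathcomp Require Import ring lra zify.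
Import Order.TTheory GRing.Theory Num.Theory.
Local Open Scope ring_scope.
Set Implicit Arguments. Unset Strict Implicit.

Definition amat (n : nat) (qc : 'I_n -> 'I_n -> int) (i j : 'I_n) : int :=
  (if i == j then 2 else 0) + (if (i < j)%N then qc i j else 0)
  + (if (j < i)%N then qc j i else 0).

Definition colv (n : nat) (qc : 'I_n -> 'I_n -> int) (x : 'I_n -> int) (j : 'I_n) : int :=
  \sum_(i < n) x i * amat qc i j.

Definition crs (n : nat) (qc : 'I_n -> 'I_n -> int) (x y : 'I_n -> int) : int :=
  \sum_(i < n) \sum_(j < n) (if (i < j)%N then qc i j * x i * y j else 0).

Lemma uf_crs n (qc : 'I_n -> 'I_n -> int) x :
  unit_form qc x = \sum_(i < n) x i ^+ 2 + crs qc x x.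
Proof.
rewrite /unit_form /crs; congr (_ + _); apply: eq_bigr => i _.
by rewrite big_mkcond.
Qed.

Lemma sum2_split n (F G : 'I_n -> 'I_n -> int) :
  \sum_(i < n) \sum_(j < n) (F i j + G i j) = \sum_(i < n) \sum_(j < n) F i j + \sum_(i < n) \sum_(j < n) G i j.
Proof. by rewrite -big_split; apply: eq_bigr => i _; rewrite big_split. Qed.

Lemma crsDl n (qc : 'I_n -> 'I_n -> int) x y z :
  crs qc (fun i => x i + y i) z = crs qc x z + crs qc y z.
Proof.
rewrite /crs -sum2_split; apply: eq_bigr => i _; apply: eq_bigr => j _.
by case: ifP => _; rewrite ?addr0 //; ring.
Qed.

Lemma crsDr n (qc : 'I_n -> 'I_n -> int) x y z :
  crs qc z (fun i => x i + y i) = crs qc z x + crs qc z y.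
Proof.
rewrite /crs -sum2_split; apply: eq_bigr => i _; apply: eq_bigr => j _.
by case: ifP => _; rewrite ?addr0 //; ring.
Qed.

Lemma sum_delta n (j : 'I_n) (f : 'I_n -> int) :
  \sum_(i < n) (if i == j then f i else 0) = f j.
Proof.
rewrite (bigD1 j) //= eqxx big1 ?addr0 // => i /negbTE ->; done.
Qed.

Lemma dot_col n (qc : 'I_n -> 'I_n -> int) x y :
  \sum_(j < n) y j * colv qc x j = \sum_(i < n) 2 * x i * y i + crs qc x y + crs qc y x.
Proof.
rewrite /colv /crs.
have -> : \sum_(j < n) y j * (\sum_(i < n) x i * amat qc i j) =
  \sum_(j < n) \sum_(i < n) ((if i == j then 2 * x i * y j else 0)
              + (if (i < j)%N then qc i j * x i * y j else 0)
  + (if (j < i)%N then qc j i * y j * x i else 0)).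
  apply: eq_bigr => j _; rewrite mulr_sumr; apply: eq_bigr => i _.
  rewrite /amat; case: (ltngtP i j) => h /=; try ring.
  - have -> : (i == j) = false by apply/eqP => e; move: h; rewrite e ltnn.
    ring.
  - have -> : (i == j) = false by apply/eqP => e; move: h; rewrite e ltnn.
    ring.
  - have e : i = j by apply: val_inj.
    rewrite e eqxx; ring.
under eq_bigr => j _ do rewrite !big_split. rewrite !big_split /=; congr (_ + _ + _).
  rewrite (exchange_big) /=; apply: eq_bigr => i _.
  have := sum_delta i (fun j => 2 * x j * y i).
  rewrite /=; move=> <-; apply: eq_bigr => j _.
  by rewrite (eq_sym i j); case: eqP => [->|]; done.
by rewrite exchange_big.
Qed.

Lemma uf_ext n (qc : 'I_n -> 'I_n -> int) x y :
  (forall i, x i = y i) -> unit_form qc x = unit_form qc y.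
Proof.
move=> h; rewrite /unit_form; congr (_ + _); apply: eq_bigr => i _.
  by rewrite h.
by apply: eq_bigr => j _; rewrite !h.
Qed.

Lemma master n (qc : 'I_n -> 'I_n -> int) x y :
  unit_form qc (fun i => x i + y i) =
  unit_form qc x + unit_form qc y + \sum_(j < n) y j * colv qc x j.
Proof.
rewrite !uf_crs crsDl !crsDr dot_col.
have -> : \sum_(i < n) (x i + y i) ^+ 2 =
   \sum_(i < n) x i ^+ 2 + \sum_(i < n) y i ^+ 2 + \sum_(i < n) 2 * x i * y i.
  rewrite -!big_split; apply: eq_bigr => i _ /=; ring.
ring.
Qed.

Lemma twoQ n (qc : 'I_n -> 'I_n -> int) x :
  2 * unit_form qc x = \sum_(j < n) x j * colv qc x j.
Proof.
rewrite dot_col uf_crs.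
have -> : \sum_(i < n) 2 * x i * x i = 2 * \sum_(i < n) x i ^+ 2.
  rewrite mulr_sumr; apply: eq_bigr => i _; ring.
ring.
Qed.

Lemma colD n (qc : 'I_n -> 'I_n -> int) x y j :
  colv qc (fun i => x i + y i) j = colv qc x j + colv qc y j.
Proof. rewrite /colv -big_split; apply: eq_bigr => i _ /=; ring. Qed.

Lemma colZ n (qc : 'I_n -> 'I_n -> int) s x j :
  colv qc (fun i => s * x i) j = s * colv qc x j.
Proof. rewrite /colv mulr_sumr; apply: eq_bigr => i _ /=; ring. Qed.

Lemma dot_e n (k : 'I_n) s (f : 'I_n -> int) :
  \sum_(j < n) (s * ebasis k j) * f j = s * f k.
Proof.
rewrite -(sum_delta k (fun j => s * f j)); apply: eq_bigr => j _.
rewrite /ebasis; case: eqP => _ /=; ring.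
Qed.

Lemma col_e n (qc : 'I_n -> 'I_n -> int) s k j :
  colv qc (fun i => s * ebasis k i) j = s * amat qc k j.
Proof. by rewrite /colv dot_e. Qed.

Lemma amat_diag n (qc : 'I_n -> 'I_n -> int) j : amat qc j j = 2.
Proof. by rewrite /amat eqxx ltnn /=; ring. Qed.

Lemma bil_e n (qc : 'I_n -> 'I_n -> int) i j :
  unit_bil qc (ebasis i) (ebasis j) = amat qc i j.
Proof.
rewrite /unit_bil master.
have -> : \sum_(k < n) ebasis j k * colv qc (ebasis i) k =
          \sum_(k < n) (1 * ebasis j k) * colv qc (ebasis i) k.
  by apply: eq_bigr => k _; rewrite mul1r.
rewrite dot_e mul1r.
have -> : colv qc (ebasis i) j = colv qc (fun k => 1 * ebasis i k) j.
  by rewrite /colv; apply: eq_bigr => k _; rewrite mul1r.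
rewrite col_e; ring.
Qed.

Lemma col_ext n (qc : 'I_n -> 'I_n -> int) x y j :
  (forall i, x i = y i) -> colv qc x j = colv qc y j.
Proof. by move=> h; apply: eq_bigr => i _; rewrite h. Qed.

Lemma sum_e n (k : 'I_n) s : \sum_(i < n) (s * ebasis k i) = s.
Proof.
have h := dot_e k s (fun _ => 1); rewrite mulr1 in h; rewrite -[RHS]h.
by apply: eq_bigr => i _; rewrite mulr1.
Qed.

Lemma le_sum n (d : 'I_n -> int) j : (forall i, 0 <= d i) -> d j <= \sum_(i < n) d i.
Proof.
move=> h; rewrite (bigD1 j) //= lerDl; apply: sumr_ge0 => i _; exact: h.
Qed.

Lemma col_lb n (qc : 'I_n -> 'I_n -> int) (d : 'I_n -> int) j :
  (forall i, 0 <= d i) -> (forall i j, i != j -> -1 <= amat qc i j) ->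
  3 * d j - \sum_(i < n) d i <= colv qc d j.
Proof.
move=> hd ha.
have h1 : colv qc d j + \sum_(i < n) d i = \sum_(i < n) (d i * amat qc i j + d i).
  by rewrite /colv big_split.
have h2 : 3 * d j <= \sum_(i < n) (d i * amat qc i j + d i).
  rewrite (bigD1 j) //= amat_diag.
  rewrite -[3 * d j]addr0; apply: lerD; first lia.
  apply: sumr_ge0 => i hij; have := ha i j hij; have := hd i; nia.
lia.
Qed.

Lemma ebasis01 n (k i : 'I_n) : ebasis k i = 0 \/ ebasis k i = 1.
Proof. by rewrite /ebasis; case: eqP; [right|left]. Qed.

Lemma Qe n (qc : 'I_n -> 'I_n -> int) s j :
  unit_form qc (fun i => s * ebasis j i) = s * s.
Proof.
have h := twoQ qc (fun i => s * ebasis j i).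
rewrite dot_e col_e amat_diag in h; lia.
Qed.

Lemma key n (qc : 'I_n -> 'I_n -> int) (v : 'I_n -> int) :
  (forall i j, i != j -> -1 <= amat qc i j) ->
  (forall i, 0 < v i) -> unit_form qc v = 1 ->
  (forall w, is_root qc w -> (forall i, v i <= w i) -> forall i, w i = v i) ->
  (forall j, 0 <= colv qc v j) -> \sum_(j < n) colv qc v j <= 2 ->
  forall N : nat, forall d, (forall i, 0 <= d i) -> \sum_(i < n) d i <= N%:Z ->
  0 < unit_form qc (fun i => v i + d i).
Proof.
move=> ha hv qv hmax hb hsb.
have zero_case : forall d, (forall i, 0 <= d i) -> (forall j, ~~ (0 < d j)) ->
    0 < unit_form qc (fun i => v i + d i).
  move=> d hd hno; rewrite (@uf_ext _ _ _ v) ?qv // => i.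
  have := hd i; move: (hno i); rewrite -leNgt; lia.
have Qvd : forall d, unit_form qc (fun i => v i + d i) =
    1 + unit_form qc d + \sum_(j < n) d j * colv qc v j.
  by move=> d; rewrite master qv.
elim=> [|N IH] d hd hs;
  (case: (boolP [exists j, 0 < d j]) => [/existsP [j0 hj0] | /existsPn hno];
   last exact: zero_case).
  have := le_sum j0 hd; set S := \sum_(i < n) d i in hs *; lia.
rewrite ltNge; apply/negP => hc.
set u := fun i => v i + d i.
have hstep : forall j, 0 < d j -> colv qc u j <= unit_form qc u - 1.
  move=> j hj.
  pose d' := fun i => d i + (-1) * ebasis j i.
  have hd' : forall i, 0 <= d' i.
    move=> i; rewrite /d' /ebasis; case: eqP => [->|_] /=; have := hd i; lia.
  have hs' : \sum_(i < n) d' i <= N%:Z.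
    rewrite /d' big_split /= sum_e; set S := \sum_(i < n) d i in hs *; lia.
  have hq' := IH d' hd' hs'.
  have E1 : unit_form qc u = unit_form qc (fun i => v i + d' i) + 1
                             + colv qc (fun i => v i + d' i) j.
    have h := master qc (fun i => v i + d' i) (fun i => 1 * ebasis j i).
    rewrite Qe dot_e in h.
    have e : unit_form qc u = unit_form qc (fun i => (v i + d' i) + 1 * ebasis j i).
      by apply: uf_ext => i; rewrite /u /d'; ring.
    rewrite e h; ring.
  have E2 : colv qc u j = colv qc (fun i => v i + d' i) j + 2.
    have h := colD qc (fun i => v i + d' i) (fun i => 1 * ebasis j i) j.
    rewrite col_e amat_diag in h.
    have e : colv qc u j = colv qc (fun i => (v i + d' i) + 1 * ebasis j i) j.
      by apply: col_ext => i; rewrite /u /d'; ring.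
    rewrite e h; ring.
  have [h1|h2] : unit_form qc (fun i => v i + d' i) = 1 \/
                 2 <= unit_form qc (fun i => v i + d' i) by lia.
    have hroot : is_root qc (fun i => v i + d' i).
      split=> // i; have := hv i; have := hd' i; lia.
    have hz := hmax _ hroot.
    have hz' : forall i, d' i = 0.
      move=> i; have := hz (fun k => ltac:(have := hd' k; lia)) i; lia.
    have hc0 : colv qc (fun i => v i + d' i) j = colv qc v j.
      by apply: col_ext => i; rewrite hz' addr0.
    have := hb j; move: hc; rewrite -/u; lia.
  lia.
rewrite -/u in hc.
have Hu : unit_form qc u = 1 + unit_form qc d + \sum_(j < n) d j * colv qc v j := Qvd d.
have H2p : 2 * unit_form qc d = \sum_(j < n) d j * colv qc d j := twoQ qc d.
have Hcu : forall j, colv qc u j = colv qc v j + colv qc d j := fun j => colD qc v d j.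
have HC : \sum_(j < n) d j * (colv qc v j + colv qc d j) <=
          \sum_(j < n) d j * (unit_form qc u - 1).
  apply: ler_sum => j _; case: (ltrP 0 (d j)) => h.
    rewrite -Hcu; apply: ler_wpM2l; [exact: ltW | exact: hstep].
  have -> : d j = 0 by have := hd j; lia.
  by rewrite !mul0r.
rewrite -mulr_suml (eq_bigr _ (fun j _ => mulrDr _ _ _)) big_split /= -H2p in HC.
have Hm4 : 4 <= \sum_(i < n) d i.
  have := hstep j0 hj0; have := col_lb j0 hd ha; rewrite Hcu; have := hb j0.
  set m := \sum_(i < n) d i in hs *; lia.
have HF : forall k, 3 * (d k * colv qc v k) <= colv qc v k * (\sum_(i < n) d i - 2).
  move=> k; case: (ltrP 0 (d k)) => h.
    have := hstep k h; have := col_lb k hd ha; rewrite Hcu; have := hb k.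
    set m := \sum_(i < n) d i in Hm4 *.
    set b := colv qc v k; set c := colv qc d k.
    move=> hbk h1 h2.
    have h3 : 3 * d k <= m - 1 - b by lia.
    have h4 : 0 <= b * (m - 1 - b - 3 * d k) by apply: mulr_ge0; lia.
    have h5 : 0 <= b * (b - 1).
      case: (ltrP 0 b) => hb1; first by apply: mulr_ge0; lia.
      have -> : b = 0 by lia.
      by rewrite mul0r.
    nia.
  have -> : d k = 0 by have := hd k; lia.
  rewrite mul0r mulr0; apply: mulr_ge0; first exact: hb.
  set m := \sum_(i < n) d i in Hm4 *; lia.
have HG : 3 * \sum_(j < n) d j * colv qc v j <=
          (\sum_(j < n) colv qc v j) * (\sum_(i < n) d i - 2).
  rewrite mulr_sumr mulr_suml; apply: ler_sum => k _; exact: HF k.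
move: HC HG Hm4 hsb hc Hu.
set m := \sum_(i < n) d i.
set be := \sum_(j < n) d j * colv qc v j.
set sb := \sum_(j < n) colv qc v j.
move=> HC HG Hm4 hsb hc Hu.
have Hbeta : m - 2 <= be.
  have : 0 <= (m - 2) * (- (unit_form qc u) ) by apply: mulr_ge0; lia.
  nia.
have : (m - 2) * sb <= (m - 2) * 2 by apply: ler_wpM2l; lia.
lia.
Qed.

Theorem theorem1p8 (n : nat) (qc : 'I_n -> 'I_n -> int) :
  slender qc ->
  (exists v : 'I_n -> int, maximal_root qc v /\ omnipresent v) ->
  weakly_nonneg qc.
Proof.
move=> Hsl [v [[[hv0 qv] hmax] hom]].
have ha : forall i j, i != j -> -1 <= amat qc i j.
  by move=> i j h; rewrite -bil_e; exact: Hsl.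
have hb : forall j, 0 <= colv qc v j.
  move=> j; rewrite leNgt; apply/negP => hneg.
  pose k := - colv qc v j.
  pose w := fun i => v i + k * ebasis j i.
  have hw : unit_form qc w = 1 by rewrite /w master qv Qe dot_e /k; ring.
  have hle : forall i, v i <= w i.
    move=> i; rewrite /w; case: (ebasis01 j i) => ->; rewrite /k; lia.
  have hroot : is_root qc w.
    split => // i; have := hle i; have := hom i; lia.
  have := hmax w hroot hle j; rewrite /w /ebasis eqxx /k; lia.
have hsum : \sum_(j < n) v j * colv qc v j = 2 by rewrite -twoQ qv.
have hsb : \sum_(j < n) colv qc v j <= 2.
  rewrite -hsum; apply: ler_sum => j _; have := hom j; have := hb j; nia.
move=> x hx; rewrite leNgt; apply/negP => hneg.
pose K := 1 + \sum_(j < n) x j * colv qc v j.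
have hK : 1 <= K.
  have : 0 <= \sum_(j < n) x j * colv qc v j.
    by apply: sumr_ge0 => j _; apply: mulr_ge0.
  rewrite /K; lia.
pose d := fun i => K * x i.
have hd : forall i, 0 <= d i by move=> i; rewrite /d; have := hx i; nia.
have Qd : unit_form qc d = K * K * unit_form qc x.
  have h1 := twoQ qc d; have h2 := twoQ qc x.
  have : \sum_(j < n) d j * colv qc d j = K * K * \sum_(j < n) x j * colv qc x j.
    rewrite mulr_sumr; apply: eq_bigr => j _; rewrite /d colZ; ring.
  nia.
have Sd : \sum_(j < n) d j * colv qc v j = K * (K - 1).
  have -> : K - 1 = \sum_(j < n) x j * colv qc v j by rewrite /K; ring.
  rewrite mulr_sumr; apply: eq_bigr => j _; rewrite /d; ring.
have hS : \sum_(i < n) d i <= (absz (\sum_(i < n) d i))%:Z by rewrite abszE ler_norm.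
have := key ha hom qv hmax hb hsb hd hS.
rewrite master qv Qd Sd; nia.
Qed.
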